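(* $$\pi^3=\frac{81}{4\cdot3^{5/2}}\sum_{n=0}^\infty\frac{(-1)^n}{n!}2^n\left[\gamma_n\!\left(\tfrac13\right)-\gamma_n\!\left(\tfrac23\right)\right]$$ $$=\frac{343}{32\cdot7^{5/2}}\sum_{n=0}^\infty\frac{(-1)^n}{n!}2^n\left[\gamma_n\!\left(\tfrac17\right)+\gamma_n\!\left(\tfrac27\right)-\gamma_n\!\left(\tfrac37\right)+\gamma_n\!\left(\tfrac47\right)-\gamma_n\!\left(\tfrac57\right)-\gamma_n\!\left(\tfrac67\right)\right].$$
   Context: The Stieltjes constants $\gamma_n(a)$ ($\mathrm{Re}\,a>0$) are defined by the Laurent expansion of the Hurwitz zeta function $\zeta(s,a)=\sum_{n\ge0}(n+a)^{-s}$ at $s=1$: $\zeta(s,a)=\frac{1}{s-1}+\sum_{n\ge0}\frac{(-1)^n}{n!}\gamma_n(a)(s-1)^n$. *)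

(* Defs.v *)
From Stdlib Require Import Reals Factorial.
From Coquelicot Require Import Coquelicot.
Open Scope R_scope.

Definition hurwitz_term (s a : R) (k : nat) : R := / Rpower (INR k + a) s.

(* The expansion is required for all real s > 1 (where the Hurwitz series
   converges); by uniqueness of power-series coefficients on an interval this
   determines g n a, i.e. g n a = gamma_n(a). *)
Definition stieltjes_laurent (g : nat -> R -> R) (a : R) : Prop :=
  forall s : R, 1 < s ->
    exists z : R,
      is_series (hurwitz_term s a) z /\
      is_series (fun n : nat => (-1) ^ n / INR (fact n) * g n a * (s - 1) ^ n)
                (z - / (s - 1)).

(* Main.v *)
Require Import Defs.
From Stdlib Require Import Reals Factorial.
From Coquelicot Require Import Coquelicot.
From Stdlib Require Import Lra Lia.
Open Scope R_scope.


Definition hh (y : R) : R := cos y / (sin y) ^ 3.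

Fixpoint ssum (f : nat -> R) (n : nat) : R :=
  match n with O => 0 | S n => ssum f n + f n end.

Lemma ssum_add f n m : ssum f (n + m) = ssum f n + ssum (fun i => f (n + i)%nat) m.
Proof. induction m as [|m IH]; simpl. rewrite Nat.add_0_r; ring.
  rewrite Nat.add_succ_r; simpl; rewrite IH; ring. Qed.

Lemma ssum_ext f g n : (forall i, (i < n)%nat -> f i = g i) -> ssum f n = ssum g n.
Proof. induction n as [|n IH]; intros H; simpl; auto.
  rewrite IH by (intros; apply H; lia). rewrite H by lia; auto. Qed.

Lemma ssum_minus f g n : ssum (fun i => f i - g i) n = ssum f n - ssum g n.
Proof. induction n; simpl; [ring| rewrite IHn; ring]. Qed.
Lemma ssum_plus f g n : ssum (fun i => f i + g i) n = ssum f n + ssum g n.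
Proof. induction n; simpl; [ring| rewrite IHn; ring]. Qed.
Lemma ssum_scal c f n : ssum (fun i => c * f i) n = c * ssum f n.
Proof. induction n; simpl; [ring| rewrite IHn; ring]. Qed.
Lemma ssum_shift g n : ssum g (S n) = g O + ssum (fun i => g (S i)) n.
Proof. induction n; simpl in *; [ring| rewrite IHn; ring]. Qed.
Lemma ssum_rev f n : ssum f n = ssum (fun i => f (n - 1 - i)%nat) n.
Proof. induction n as [|n IH]; [reflexivity|].
  change (ssum f (S n)) with (ssum f n + f n).
  rewrite ssum_shift. rewrite IH. replace (S n - 1 - 0)%nat with n by lia.
  rewrite Rplus_comm. f_equal. apply ssum_ext. intros i Hi. f_equal. lia. Qed.
Lemma ssum_abs f n : Rabs (ssum f n) <= ssum (fun i => Rabs (f i)) n.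
Proof. induction n; simpl. rewrite Rabs_R0; lra.
  eapply Rle_trans. apply Rabs_triang. lra. Qed.
Lemma ssum_le f g n : (forall i, (i < n)%nat -> f i <= g i) -> ssum f n <= ssum g n.
Proof. induction n as [|n IH]; intros H; simpl. lra.
  assert (ssum f n <= ssum g n) by (apply IH; intros; apply H; lia).
  assert (f n <= g n) by (apply H; lia). lra. Qed.
Lemma ssum_const c n : ssum (fun _ => c) n = INR n * c.
Proof. induction n. simpl. ring. 
  change (ssum (fun _ => c) (S n)) with (ssum (fun _ => c) n + c). rewrite IHn, S_INR; ring. Qed.
Lemma ssum_sum_f_R0 f n : ssum f (S n) = sum_f_R0 f n.
Proof. induction n. simpl. ring.
  change (ssum f (S (S n))) with (ssum f (S n) + f (S n)). rewrite IHn. reflexivity. Qed.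

Lemma hh_per y : hh (y + PI) = hh y.
Proof. unfold hh. rewrite neg_sin, neg_cos.
  destruct (Req_dec (sin y) 0) as [E|E]. rewrite E. replace (-0) with 0 by ring. unfold Rdiv.
  replace (0^3) with 0 by ring. rewrite Rinv_0. ring. field. auto. Qed.
Lemma hh_odd y : hh (- y) = - hh y.
Proof. unfold hh. rewrite sin_neg, cos_neg.
  destruct (Req_dec (sin y) 0) as [E|E]. rewrite E. replace (-0) with 0 by ring. unfold Rdiv.
  replace (0^3) with 0 by ring. rewrite Rinv_0. ring. field. auto. Qed.
Lemma hh_dup y : sin y <> 0 -> hh (y / 2) + hh (y / 2 + PI / 2) = 8 * hh y.
Proof. intros H. unfold hh. rewrite sin_plus, cos_plus, sin_PI2, cos_PI2.
  assert (Hy: y = 2*(y/2)) by field. set (t := y/2) in *. rewrite Hy in H |- *.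
  rewrite sin_2a, cos_2a_cos in *.
  set (s := sin t) in *. set (c := cos t) in *.
  assert (Hs : s <> 0) by (intro E; apply H; rewrite E; ring).
  assert (Hc : c <> 0) by (intro E; apply H; rewrite E; ring).
  assert (E : s ^ 2 + c ^ 2 = 1) by (unfold s, c; rewrite <- (sin2_cos2 t); unfold Rsqr; ring).
  replace (2 * c * c - 1) with (c^2 - s^2) by (rewrite <- E; ring).
  replace (c^2 - s^2) with ((c^2 - s^2)*(s^2+c^2)) by (rewrite E; ring).
  field. auto.
Qed.
Lemma powb y k : 0 <= y <= 2 -> 0 <= y^(6+k) <= 2^k * y^6.
Proof. intros H. rewrite pow_add. split. apply Rmult_le_pos; apply pow_le; lra.
  rewrite Rmult_comm. apply Rmult_le_compat_r. apply pow_le; lra. apply pow_incr; lra. Qed.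
Lemma up_b y : 0 <= y <= 2 ->
  (1 - y^2/2 + y^4/24 - y^6/720 + y^8/40320) * y^3 - (y - y^3/6 + y^5/120 - y^7/5040)^3 <= y^6.
Proof. intros H.
  pose proof (powb y 1 H). pose proof (powb y 3 H). pose proof (powb y 5 H). pose proof (powb y 7 H).
  pose proof (powb y 9 H). pose proof (powb y 11 H). pose proof (powb y 13 H). pose proof (powb y 15 H).
  simpl in *. lra. Qed.
Lemma lo_b y : 0 <= y <= 2 ->
  -y^6 <= (1 - y^2/2 + y^4/24 - y^6/720) * y^3 - (y - y^3/6 + y^5/120)^3.
Proof. intros H.
  pose proof (powb y 1 H). pose proof (powb y 3 H). pose proof (powb y 5 H). pose proof (powb y 7 H).
  pose proof (powb y 9 H). 
  simpl in *. lra. Qed.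
Lemma INR_fact_S n : INR (fact (S n)) = INR (S n) * INR (fact n).
Proof. rewrite fact_simpl, mult_INR. reflexivity. Qed.
Ltac unf_approx := cbn [sum_f_R0 Nat.mul Nat.add]; rewrite ?INR_fact_S; cbn [fact INR pow]; field.
Lemma poly_facts y : 0 <= y <= 2 ->
  y/3 <= y - y^3/6 + y^5/120 - y^7/5040 /\
  y - y^3/6 + y^5/120 - y^7/5040 + y^9/362880 <= y - y^3/6 + y^5/120.
Proof. intros Hy. assert (y^2 <= 4) by nra.
    assert (y^3 <= 4*y) by (replace (y^3) with (y*y^2) by ring; nra).
    assert (0 <= y^5) by (apply pow_le; lra).
    assert (0 <= y^7) by (apply pow_le; lra).
    assert (y^7 <= 4*y^5) by (replace (y^7) with (y^5*y^2) by ring; nra).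
    assert (y^9 <= 4*y^7) by (replace (y^9) with (y^7*y^2) by ring; nra).
    split; lra. Qed.

Lemma err y : 0 < y < PI/2 -> Rabs (hh y - / y^3) <= 27.
Proof. intros [H0 H1]. pose proof PI_4.
  assert (Hy : 0 <= y <= 2) by lra.
  destruct (SIN y) as [Sl Su]; [lra|lra|].
  destruct (COS y) as [Cl Cu]; [lra|lra|].
  assert (E1 : sin_lb y = y - y^3/6 + y^5/120 - y^7/5040) by (unfold sin_lb, sin_approx, sin_term; unf_approx).
  assert (E2 : sin_ub y = y - y^3/6 + y^5/120 - y^7/5040 + y^9/362880) by (unfold sin_ub, sin_approx, sin_term; unf_approx).
  assert (E3 : cos_lb y = 1 - y^2/2 + y^4/24 - y^6/720) by (unfold cos_lb, cos_approx, cos_term; unf_approx).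
  assert (E4 : cos_ub y = 1 - y^2/2 + y^4/24 - y^6/720 + y^8/40320) by (unfold cos_ub, cos_approx, cos_term; unf_approx).
  rewrite E1 in Sl. rewrite E2 in Su. rewrite E3 in Cl. rewrite E4 in Cu. clear E1 E2 E3 E4.
  destruct (poly_facts y Hy) as [HL HU].
  pose proof (up_b y Hy) as Hup. pose proof (lo_b y Hy) as Hlo.
  assert (Hy3 : 0 < y^3) by (apply pow_lt; lra).
  assert (Hs3 : (y/3)^3 <= sin y^3) by (apply pow_incr; lra).
  assert (HsL : (y - y^3/6 + y^5/120 - y^7/5040)^3 <= sin y^3) by (apply pow_incr; lra).
  assert (HsU : sin y^3 <= (y - y^3/6 + y^5/120)^3) by (apply pow_incr; lra).
  assert (Hc1 : cos y * y^3 <= (1 - y^2/2 + y^4/24 - y^6/720 + y^8/40320) * y^3) by (apply Rmult_le_compat_r; lra).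
  assert (Hc2 : (1 - y^2/2 + y^4/24 - y^6/720) * y^3 <= cos y * y^3) by (apply Rmult_le_compat_r; lra).
  assert (HN : Rabs (cos y * y^3 - sin y^3) <= y^6) by (apply Rabs_le; lra).
  assert (Hs3p : 0 < sin y^3) by (apply pow_lt; lra).
  replace (hh y - / y^3) with ((cos y * y^3 - sin y^3) / (sin y^3 * y^3)) by (unfold hh; field; lra).
  assert (y^3 <= 27 * sin y^3). { replace ((y/3)^3) with (y^3/27) in Hs3 by field. lra. }
  set (s3 := sin y ^3) in *. set (y3 := y^3) in *. set (N := cos y * y3 - s3) in *.
  replace (y^6) with (y3*y3) in HN by (unfold y3; ring).
  unfold Rdiv. rewrite Rabs_mult, Rabs_inv, (Rabs_right (s3*y3)) by nra.
  apply Rle_trans with (y3*y3 * / (s3 * y3)).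
  apply Rmult_le_compat_r. left; apply Rinv_0_lt_compat; nra. auto.
  replace (y3*y3 * / (s3*y3)) with (y3 / s3) by (field; lra).
  apply Rmult_le_reg_r with s3. lra. unfold Rdiv. rewrite Rmult_assoc, Rinv_l by lra. lra.
Qed.


Lemma INR2 : INR 2 = 2.
Proof. simpl; ring. Qed.

Lemma not_int a : 0 < a < 1 -> forall z : Z, a <> IZR z.
Proof. intros [H0 H1] z E. subst. apply lt_0_IZR in H0. apply lt_IZR in H1. lia. Qed.

Lemma sin_nz a m i : 0 < a < 1 -> sin (PI * (a + INR i) / 2 ^ m) <> 0.
Proof. intros Ha E. apply sin_eq_0_0 in E. destruct E as [k Hk].
  pose proof PI_RGT_0. assert (H2 : 2 ^ m <> 0) by (apply pow_nonzero; lra).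
  assert (E : a + INR i = IZR k * 2 ^ m).
  { apply Rmult_eq_reg_l with (PI / 2 ^ m). transitivity (IZR k * PI).
    rewrite <- Hk; field; auto. field; auto. intro E. 
    apply Rmult_integral in E as [E|E]; [lra|]. apply Rinv_neq_0_compat in H2; auto. }
  apply (not_int a Ha (k * Z.of_nat (2 ^ m) - Z.of_nat i)).
  rewrite minus_IZR, mult_IZR, <- !INR_IZR_INZ, pow_INR, INR2. lra. Qed.

Lemma dupm a : 0 < a < 1 -> forall m,
  ssum (fun j => hh (PI * (a + INR j) / 2 ^ m)) (2 ^ m) = 8 ^ m * hh (PI * a).
Proof. intros Ha m. pose proof PI_RGT_0. induction m as [|m IH].
  - simpl. replace (PI * (a + 0) / 1) with (PI * a) by field. ring.
  - assert (H2 : 2 ^ m <> 0) by (apply pow_nonzero; lra).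
    rewrite Nat.pow_succ_r'. replace (2 * 2 ^ m)%nat with (2 ^ m + 2 ^ m)%nat by lia.
    rewrite ssum_add, <- ssum_plus.
    transitivity (ssum (fun i => 8 * hh (PI * (a + INR i) / 2 ^ m)) (2 ^ m)).
    + apply ssum_ext; intros i _. rewrite <- hh_dup by (apply sin_nz; auto).
      f_equal; f_equal; simpl pow.
      * field; auto.
      * rewrite plus_INR, pow_INR, INR2. field; auto.
    + rewrite ssum_scal, IH. simpl pow. ring.
Qed.

Lemma ssum_opp f n : ssum (fun i => - f i) n = - ssum f n.
Proof. induction n; simpl; [ring| rewrite IHn; ring]. Qed.

Lemma sym a m : 0 < a < 1 ->
  ssum (fun k => hh (PI * (INR k + a) / 2 ^ S m) - hh (PI * (INR k + 1 - a) / 2 ^ S m)) (2 ^ m)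
  = 8 ^ S m * hh (PI * a).
Proof. intros Ha. pose proof PI_RGT_0. rewrite <- (dupm a Ha (S m)).
  assert (H2 : 2 ^ m <> 0) by (apply pow_nonzero; lra).
  rewrite Nat.pow_succ_r'. replace (2 * 2 ^ m)%nat with (2 ^ m + 2 ^ m)%nat by lia.
  rewrite ssum_add, ssum_minus. unfold Rminus. f_equal.
  - apply ssum_ext; intros i _. do 3 f_equal. ring.
  - rewrite <- ssum_opp. rewrite (ssum_rev (fun i => hh (PI * (a + INR (2 ^ m + i)) / 2 ^ S m))).
    apply ssum_ext; intros k Hk.
    assert (E : INR (2 ^ m - 1 - k) = 2 ^ m - 1 - INR k).
    { rewrite !minus_INR by lia. rewrite pow_INR, INR2. simpl INR. ring. }
    rewrite plus_INR, E, pow_INR, INR2.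
    replace (PI * (a + (2 ^ m + (2 ^ m - 1 - INR k))) / 2 ^ S m)
      with (- (PI * (INR k + 1 - a) / 2 ^ S m) + PI) by (simpl pow; field; auto).
    rewrite hh_per, hh_odd. reflexivity.
Qed.

Lemma lt_half x P : 0 < x < P -> 0 < PI * x / (2 * P) < PI / 2.
Proof. intros [H0 H1]. pose proof PI_RGT_0. split.
  apply Rdiv_lt_0_compat; nra.
  assert (E : PI / 2 - PI * x / (2 * P) = PI * (P - x) / (2 * P)) by (field; lra).
  assert (0 < PI * (P - x) / (2 * P)) by (apply Rdiv_lt_0_compat; nra). lra. Qed.

Lemma approx a m : 0 < a < 1 ->
  Rabs (PI ^ 3 * hh (PI * a) - ssum (fun k => / (INR k + a) ^ 3 - / (INR k + 1 - a) ^ 3) (2 ^ m))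
  <= INR (2 ^ m) * (54 * (PI / 2 ^ S m) ^ 3).
Proof. intros Ha. pose proof PI_RGT_0.
  assert (HP : 0 < 2 ^ m) by (apply pow_lt; lra).
  assert (E8 : PI ^ 3 = (PI / 2 ^ S m) ^ 3 * 8 ^ S m).
  { replace 8 with (2 ^ 3) by ring. rewrite <- !pow_mult, Nat.mul_comm, pow_mult. field.
    apply pow_nonzero; lra. }
  rewrite E8, Rmult_assoc, <- sym by auto. rewrite <- ssum_scal, <- ssum_minus.
  rewrite <- ssum_const. eapply Rle_trans; [apply ssum_abs|]. apply ssum_le. intros k Hk.
  assert (Hk1 : INR k + 1 <= 2 ^ m).
  { rewrite <- INR2, <- pow_INR, <- S_INR. apply le_INR. lia. }
  pose proof (pos_INR k).
  set (P := 2 ^ m) in *.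
  assert (EP : 2 ^ S m = 2 * P) by reflexivity. rewrite EP.
  assert (Y1 := lt_half (INR k + a) P ltac:(lra)).
  assert (Y2 := lt_half (INR k + 1 - a) P ltac:(lra)).
  set (y1 := PI * (INR k + a) / (2 * P)) in *.
  set (y2 := PI * (INR k + 1 - a) / (2 * P)) in *.
  replace ((PI / (2 * P)) ^ 3 * (hh y1 - hh y2) - (/ (INR k + a) ^ 3 - / (INR k + 1 - a) ^ 3))
    with ((PI / (2 * P)) ^ 3 * ((hh y1 - / y1 ^ 3) - (hh y2 - / y2 ^ 3))).
  2: { unfold y1, y2. field. repeat split; lra. }
  rewrite Rabs_mult, (Rabs_right ((PI / (2*P))^3)).
  2: { left. apply pow_lt. apply Rdiv_lt_0_compat; lra. }
  rewrite Rmult_comm. apply Rmult_le_compat_r. apply pow_le. left; apply Rdiv_lt_0_compat; lra.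
  pose proof (err y1 Y1). pose proof (err y2 Y2).
  eapply Rle_trans. apply Rabs_triang. rewrite Rabs_Ropp. lra.
Qed.

Lemma pow2_ge n : (n + 1 <= 2 ^ n)%nat.
Proof. induction n; simpl; lia. Qed.

Lemma key a L : 0 < a < 1 ->
  is_series (fun k => / (INR k + a) ^ 3 - / (INR k + 1 - a) ^ 3) L -> L = PI ^ 3 * hh (PI * a).
Proof. intros Ha HL. apply is_series_Reals in HL.
  set (X := PI ^ 3 * hh (PI * a)).
  destruct (Req_dec L X) as [E|Hne]; auto. exfalso.
  assert (He : 0 < Rabs (L - X) / 3) by (apply Rdiv_lt_0_compat; [apply Rabs_pos_lt; lra|lra]).
  set (eps := Rabs (L - X) / 3) in *.
  destruct (HL eps He) as [n0 Hn0].
  destruct (INR_unbounded (432 / eps)) as [K HK].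
  set (m := (K + n0)%nat).
  pose proof (pow2_ge m) as Hm.
  assert (HS : ssum (fun k => / (INR k + a) ^ 3 - / (INR k + 1 - a) ^ 3) (2 ^ m)
    = sum_f_R0 (fun k => / (INR k + a) ^ 3 - / (INR k + 1 - a) ^ 3) (2 ^ m - 1)).
  { rewrite <- ssum_sum_f_R0. f_equal. lia. }
  specialize (Hn0 (2 ^ m - 1)%nat ltac:(assert (n0 <= m)%nat by (unfold m; lia); lia)). unfold Rdist in Hn0.
  pose proof (approx a m Ha) as Hap. fold X in Hap. rewrite HS in Hap.
  pose proof PI_RGT_0. pose proof PI_4.
  assert (HM : INR K + 1 <= INR (2 ^ m)).
  { rewrite <- S_INR. apply le_INR. eapply Nat.le_trans; [|exact Hm]. unfold m. lia. }
  set (M := INR (2 ^ m)) in *.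
  assert (HM1 : 1 <= M). { pose proof (pos_INR K). lra. }
  assert (EM : 2 ^ S m = 2 * M). { unfold M. rewrite pow_INR, INR2. reflexivity. }
  rewrite EM in Hap.
  assert (Hb : M * (54 * (PI / (2 * M)) ^ 3) <= 432 / M).
  { replace (M * (54 * (PI / (2 * M)) ^ 3)) with (54 * PI^3 / (8 * M^2)) by (field; lra).
    apply Rmult_le_reg_r with (8 * M^2). nra. unfold Rdiv.
    rewrite Rmult_assoc, Rinv_l by nra.
    replace (432 * / M * (8 * M^2)) with (3456 * M) by (field; lra).
    assert (PI^3 <= 64) by (replace 64 with (4^3) by ring; apply pow_incr; lra).
    nra. }
  assert (Hc : 432 / M < eps).
  { apply Rmult_lt_reg_r with (M / eps). apply Rdiv_lt_0_compat; lra.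
    replace (432 / M * (M / eps)) with (432 / eps) by (field; lra).
    replace (eps * (M / eps)) with M by (field; lra). lra. }
  set (S := sum_f_R0 _ _) in *.
  assert (Rabs (L - X) <= Rabs (S - L) + Rabs (X - S)).
  { replace (L - X) with (-(S - L) - (X - S)) by ring.
    eapply Rle_trans. apply Rabs_triang. rewrite !Rabs_Ropp. lra. }
  unfold eps in *. lra.
Qed.

Lemma seven_alg c s : s <> 0 -> c <> 0 -> 2*c*c - 1 <> 0 -> s^2 = 1 - c^2 ->
  8*c^3 - 4*c^2 - 4*c + 1 = 0 ->
  7 * (c / s^3 + (2*c*c-1) / (2*s*c)^3 + (2*(2*c*c-1)*(2*c*c-1) - 1) / (2*(2*s*c)*(2*c*c-1))^3)^2 = 1024.
Proof. intros Hs Hc Ht Hsc Hcub.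
  set (t := 2*c*c - 1) in *.
  set (P := 64*c^4*t^3 + 8*t^4 + 2*t^2 - 1).
  set (D := 64*c^3*t^3).
  assert (HD : D <> 0) by (unfold D; apply Rmult_integral_contrapositive_currified; [apply Rmult_integral_contrapositive_currified; [lra| apply pow_nonzero; auto] | apply pow_nonzero; auto]).
  replace (c / s^3 + t / (2*s*c)^3 + (2*t*t - 1) / (2*(2*s*c)*t)^3) with (P / (D * s^3))
    by (unfold P, D; field; repeat split; auto).
  assert (E6 : s^6 = (1-c^2)^3) by (rewrite <- Hsc; ring).
  replace (7 * (P / (D * s^3))^2) with (7 * P^2 / (D^2 * s^6)) by (field; split; auto).
  rewrite E6.
  assert (Hid : 7 * P^2 - 1024 * (1-c^2)^3 * D^2 = ((567)*c^0 + (2268)*c^1 + (2268)*c^2 + (13608)*c^3 + (98784)*c^4 + (431424)*c^5 + (-2303296)*c^6 + (-8277760)*c^7 + (17058752)*c^8 + (53550336)*c^9 + (-65624320)*c^10 + (-184765952)*c^11 + (149668864)*c^12 + (384606208)*c^13 + (-210149376)*c^14 + (-499523584)*c^15 + (178372608)*c^16 + (396591104)*c^17 + (-83886080)*c^18 + (-176160768)*c^19 + (16777216)*c^20 + (33554432)*c^21) * (8*c^3 - 4*c^2 - 4*c + 1))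
    by (unfold P, D, t; ring).
  rewrite Hcub, Rmult_0_r in Hid.
  assert (Hs6 : (1 - c^2)^3 <> 0) by (rewrite <- Hsc, <- pow_mult; apply pow_nonzero; auto).
  apply Rmult_eq_reg_r with (D^2 * (1-c^2)^3).
  unfold Rdiv. rewrite Rmult_assoc, Rinv_l. lra.
  apply Rmult_integral_contrapositive; split; auto; apply pow_nonzero; auto.
  apply Rmult_integral_contrapositive; split; auto; apply pow_nonzero; auto.
Qed.

Lemma seven : hh (PI * (1/7)) + hh (PI * (2/7)) + hh (PI * (4/7)) = 32 * sqrt 7 / 7.
Proof. pose proof PI_RGT_0 as Hpi.
  set (x := PI / 7).
  replace (PI * (1/7)) with x by (unfold x; field).
  replace (PI * (2/7)) with (2*x) by (unfold x; field).
  replace (PI * (4/7)) with (2*(2*x)) by (unfold x; field).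
  assert (Hs : 0 < sin x) by (apply sin_gt_0; unfold x; lra).
  assert (Hc : 0 < cos x) by (apply cos_gt_0; unfold x; lra).
  assert (Hs2 : 0 < sin (2*x)) by (apply sin_gt_0; unfold x; lra).
  assert (Hc2 : 0 < cos (2*x)) by (apply cos_gt_0; unfold x; lra).
  assert (Hs4 : 0 < sin (2*(2*x))) by (apply sin_gt_0; unfold x; lra).
  assert (Hs3 : 0 < sin (3*x)) by (apply sin_gt_0; unfold x; lra).
  assert (Hc3 : 0 < cos (3*x)) by (apply cos_gt_0; unfold x; lra).
  assert (E4 : 2*(2*x) = PI - 3*x) by (unfold x; field).
  assert (C4 : cos (2*(2*x)) = - cos (3*x)) by (rewrite E4; apply Rtrigo_facts.cos_pi_minus).
  assert (S4 : sin (2*(2*x)) = sin (3*x)) by (rewrite E4; apply sin_PI_x).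
  assert (Hlt1 : sin x < sin (3*x)) by (apply sin_increasing_1; unfold x; lra).
  assert (Hlt2 : cos (3*x) < cos x) by (apply cos_decreasing_1; unfold x; lra).
  assert (Hpos : 0 < hh x + hh (2*x) + hh (2*(2*x))).
  { unfold hh. rewrite C4, S4.
    assert (0 < cos (2*x) / sin (2*x)^3) by (apply Rdiv_lt_0_compat; [lra| apply pow_lt; lra]).
    assert (HA : sin x ^3 <= sin (3*x)^3) by (apply pow_incr; lra).
    assert (0 < sin x ^3) by (apply pow_lt; lra).
    set (A := sin x ^3) in *. set (B := sin (3*x)^3) in *.
    assert (0 < cos x / A + - cos (3*x) / B).
    { replace (cos x / A + - cos (3*x) / B) with ((cos x * B - cos (3*x) * A) / (A * B)). 2:{ clearbody A B. field. split; lra. }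
      apply Rdiv_lt_0_compat; nra. }
    lra. }
  set (S := hh x + hh (2*x) + hh (2*(2*x))) in *.
  assert (HS2 : 7 * S^2 = 1024).
  { unfold S, hh. rewrite sin_2a, cos_2a_cos. rewrite (sin_2a (2*x)), (cos_2a_cos (2*x)). rewrite sin_2a, cos_2a_cos.
    assert (Hsc : sin x ^2 = 1 - cos x ^2) by (rewrite <- (sin2_cos2 x); unfold Rsqr; ring).
    apply seven_alg; try lra.
    rewrite cos_2a_cos in Hc2. lra.
    assert (E3 : cos (3*x) = 4 * cos x ^3 - 3 * cos x).
    { replace (3*x) with (2*x + x) by ring. rewrite cos_plus, sin_2a, cos_2a_cos.
      replace (2 * sin x * cos x * sin x) with (2 * cos x * sin x ^2) by ring. rewrite Hsc. ring. }
    rewrite (cos_2a_cos (2*x)), cos_2a_cos, E3 in C4.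
    assert (Hq : (cos x + 1) * (8 * cos x ^3 - 4 * cos x ^2 - 4 * cos x + 1) = 0) by lra.
    apply Rmult_integral in Hq. destruct Hq; [lra|auto]. }
  assert (H7 : 0 < sqrt 7) by (apply sqrt_lt_R0; lra).
  assert (E7 : sqrt 7 * sqrt 7 = 7) by (apply sqrt_sqrt; lra).
  assert (HSr : S * sqrt 7 = 32).
  { assert (0 < S * sqrt 7) by nra.
    assert ((S * sqrt 7)^2 = 1024) by (replace ((S * sqrt 7)^2) with (S^2 * (sqrt 7 * sqrt 7)) by ring; rewrite E7; lra).
    nra. }
  replace S with (S * sqrt 7 * sqrt 7 / 7) by (rewrite Rmult_assoc, E7; field).
  rewrite HSr. reflexivity.
Qed.

Ltac fixeq := match goal with |- @eq _ ?x ?y => change (@eq R x y) end; cbv beta;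
  repeat change (plus ?x (opp ?y)) with (x - y); repeat change (plus ?x ?y) with (x + y).

Lemma hurw a k : 0 < a -> hurwitz_term 3 a k = / (INR k + a) ^ 3.
Proof. intros Ha. unfold hurwitz_term.
  replace (Rpower (INR k + a) 3) with (Rpower (INR k + a) (INR 3)) by (f_equal; simpl; ring).
  rewrite Rpower_pow. reflexivity. pose proof (pos_INR k). lra. Qed.

Lemma pair (g : nat -> R -> R) (hg : forall a : R, 0 < a -> stieltjes_laurent g a) a b :
  0 < a < 1 -> b = 1 - a ->
  is_series (fun n => (-1) ^ n / INR (fact n) * 2 ^ n * (g n a - g n b)) (PI ^ 3 * hh (PI * a)).
Proof. intros Ha Hb.
  destruct (hg a ltac:(lra) 3 ltac:(lra)) as [za [H1 H2]].
  destruct (hg b ltac:(lra) 3 ltac:(lra)) as [zb [H3 H4]].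
  assert (Hk : za - zb = PI ^ 3 * hh (PI * a)).
  { apply key; auto.
    replace (za - zb) with (plus za (opp zb)) by reflexivity.
    eapply is_series_ext; [|exact (is_series_minus _ _ _ _ H1 H3)].
    intros n. simpl. change (plus ?x (opp ?y)) with (x - y).
    rewrite !hurw by lra. subst b. replace (INR n + (1 - a)) with (INR n + 1 - a) by ring. reflexivity. }
  rewrite <- Hk.
  replace (za - zb) with ((za - / (3 - 1)) - (zb - / (3 - 1))) by ring.
  replace ((za - / (3 - 1)) - (zb - / (3 - 1))) with (plus (za - / (3 - 1)) (opp (zb - / (3 - 1)))) by reflexivity.
  eapply is_series_ext; [|exact (is_series_minus _ _ _ _ H2 H4)].
  intros n. fixeq. replace (3 - 1) with 2 by ring. ring.
Qed.

Theorem corollary1 (g : nat -> R -> R)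
  (hg : forall a : R, 0 < a -> stieltjes_laurent g a) :
  let u3 := fun n : nat =>
    (-1) ^ n / INR (fact n) * 2 ^ n * (g n (1/3) - g n (2/3)) in
  let u7 := fun n : nat =>
    (-1) ^ n / INR (fact n) * 2 ^ n *
    (g n (1/7) + g n (2/7) - g n (3/7) + g n (4/7) - g n (5/7) - g n (6/7)) in
  ex_series u3 /\ ex_series u7 /\
  PI ^ 3 = 81 / (4 * Rpower 3 (5/2)) * Series u3 /\
  PI ^ 3 = 343 / (32 * Rpower 7 (5/2)) * Series u7.
Proof.
  intros u3 u7.
  assert (S3 : is_series u3 (PI ^ 3 * hh (PI * (1/3)))).
  { apply (pair g hg); lra. }
  assert (S7 : is_series u7 (PI ^ 3 * hh (PI * (1/7)) + PI ^ 3 * hh (PI * (2/7)) + PI ^ 3 * hh (PI * (4/7)))).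
  { pose proof (pair g hg (1/7) (6/7) ltac:(lra) ltac:(lra)) as A1.
    pose proof (pair g hg (2/7) (5/7) ltac:(lra) ltac:(lra)) as A2.
    pose proof (pair g hg (4/7) (3/7) ltac:(lra) ltac:(lra)) as A4.
    pose proof (is_series_plus _ _ _ _ (is_series_plus _ _ _ _ A1 A2) A4) as A.
    eapply is_series_ext; [|exact A]. intros n. unfold u7. fixeq. ring. }
  assert (Hpi := PI_RGT_0).
  split; [exists (PI ^ 3 * hh (PI * (1/3))); exact S3|].
  split; [eexists; exact S7|].
  rewrite (is_series_unique _ _ S3), (is_series_unique _ _ S7).
  split.
  - replace (PI * (1/3)) with (PI / 3) by field. unfold hh. rewrite sin_PI3, cos_PI3.
    replace (5/2) with (INR 2 + / 2) by (simpl; field).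
    rewrite Rpower_plus, Rpower_pow, Rpower_sqrt by lra.
    assert (H3 : 0 < sqrt 3) by (apply sqrt_lt_R0; lra).
    assert (E3 : sqrt 3 * sqrt 3 = 3) by (apply sqrt_sqrt; lra).
    set (r := sqrt 3) in *. clearbody r.
    replace (1 / 2 / (r / 2) ^ 3) with (4 * (/ r * / r * / r)) by (field; lra).
    assert (Hi : / r = r / 3) by (rewrite <- E3; field; lra).
    rewrite Hi. replace (r / 3 * (r / 3) * (r / 3)) with (r * r * r / 27) by field. rewrite E3.
    field. lra.
  - rewrite <- !Rmult_plus_distr_l. rewrite seven.
    replace (5/2) with (INR 2 + / 2) by (simpl; field).
    rewrite Rpower_plus, Rpower_pow, Rpower_sqrt by lra.
    assert (H7 : 0 < sqrt 7) by (apply sqrt_lt_R0; lra).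
    assert (E7 : sqrt 7 * sqrt 7 = 7) by (apply sqrt_sqrt; lra).
    set (r := sqrt 7) in *. clearbody r.
    field. lra.
Qed.
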